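(* Let $\{(x_i,y_i)\}_{i=1}^n\subset\mathcal X\times\mathcal Y$ be a dataset and $\alpha\in(0,1)$. Let $F:\mathcal X\to\mathcal Y$ be a deterministic classifier and let $F'$ be a randomized classifier (for each $x$, $F'(x)$ is a $\mathcal Y$-valued random variable) whose average zero-one loss equals that of $F$, i.e. $$\frac1n\sum_{i=1}^n \Pr(F'(x_i)\neq y_i)=\frac1n\sum_{i=1}^n \mathbf 1_{\{F(x_i)\neq y_i\}}.$$ Define $$\mathrm{CVaR}_\alpha(F)=\max_{w\in\Delta_n,\ w_i\le\frac1{\alpha n}\ \forall i}\sum_{i=1}^n w_i\mathbf 1_{\{F(x_i)\neq y_i\}},\qquad \mathrm{CVaR}_\alpha(F')=\max_{w\in\Delta_n,\ w_i\le\frac1{\alpha n}\ \forall i}\sum_{i=1}^n w_i\Pr(F'(x_i)\neq y_i),$$ where $\Delta_n=\{w\in\mathbb R^n:w_i\ge0,\sum_iw_i=1\}$. Then $\mathrm{CVaR}_\alpha(F')\le \mathrm{CVaR}_\alpha(F)$.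
   Context: The $\alpha$-CVaR zero-one loss measures the average zero-one loss over the worst $\alpha$ fraction of the dataset; for a randomized classifier the per-sample loss is the probability of misclassification. *)

(* Defs.v *)
From HB Require Import structures.
From mathcomp Require Import all_boot all_order all_algebra.
From mathcomp Require Import all_classical all_reals all_analysis.
Set Implicit Arguments. Unset Strict Implicit. Unset Printing Implicit Defensive.
Import Order.TTheory GRing.Theory Num.Theory.
Local Open Scope classical_set_scope.
Local Open Scope ring_scope.

Definition cvar_weights (R : realType) (n : nat) (alpha : R) (w : 'I_n -> R) : Prop :=
  (forall i, 0 <= w i) /\ (\sum_(i < n) w i = 1) /\
  (forall i, w i <= (alpha * n%:R)^-1).

(* alpha-CVaR of a per-sample loss vector: max over feasible weights of the
   weighted loss (written as the supremum; the maximum is attained). *)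
Definition cvar (R : realType) (n : nat) (alpha : R) (l : 'I_n -> R) : R :=
  sup [set s : R | exists w : 'I_n -> R,
         cvar_weights alpha w /\ s = \sum_(i < n) w i * l i].

Definition loss01 (R : realType) (X : Type) (Y : eqType) (n : nat)
  (x : 'I_n -> X) (y : 'I_n -> Y) (F : X -> Y) (i : 'I_n) : R :=
  (F (x i) != y i)%:R.

Definition rloss01 (R : realType) (X : Type) (d : measure_display)
  (Y : measurableType d) (n : nat) (x : 'I_n -> X) (y : 'I_n -> Y)
  (F' : X -> probability Y R) (i : 'I_n) : R :=
  fine (F' (x i) [set z | z <> y i]).

Arguments loss01 R {X Y n} x y F i.
Arguments rloss01 R {X d Y n} x y F' i.

(* Main.v *)
Require Import Defs.
From HB Require Import structures.
From mathcomp Require Import all_boot all_order all_algebra.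
From mathcomp Require Import all_classical all_reals all_analysis.
From mathcomp Require Import lra.
Import Order.TTheory GRing.Theory Num.Theory.
Local Open Scope classical_set_scope.
Local Open Scope ring_scope.

Lemma upper_p (R : realType) n (c : R) (p w : 'I_n -> R) :
  (forall i, 0 <= p i <= 1) -> (forall i, 0 <= w i) -> \sum_i w i = 1 ->
  (forall i, w i <= c) ->
  \sum_i w i * p i <= Num.min 1 ((\sum_i p i) * c).
Proof.
move=> hp hw hs hc; rewrite le_min; apply/andP; split.
  rewrite -hs; apply: ler_sum => i _.
  have := hp i; have := hw i; nra.
rewrite mulr_suml; apply: ler_sum => i _.
have := hp i; have := hw i; have := hc i; nra.
Qed.

Lemma exists_w (R : realType) n (c : R) (l : 'I_n -> R) : (0 < n)%N ->
  1 <= n%:R * c -> (forall i, l i * l i = l i) ->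
  exists w : 'I_n -> R, [/\ (forall i, 0 <= w i), \sum_i w i = 1,
    (forall i, w i <= c) & Num.min 1 ((\sum_i l i) * c) <= \sum_i w i * l i].
Proof.
move=> n0 hnc hl.
have l01 : forall i, 0 <= l i <= 1.
  move=> i; have := hl i; nra.
set k := \sum_i l i.
have hk0 : 0 <= k by apply: sumr_ge0 => i _; have /andP[] := l01 i.
have hkn : k <= n%:R.
  have -> : n%:R = \sum_(i < n) (1 : R) by rewrite sumr_const card_ord.
  by apply: ler_sum => i _; have /andP[] := l01 i.
have c0 : 0 < c.
  have : (0 : R) < n%:R by rewrite ltr0n.
  nra.
have [hkc|hkc] := leP 1 (k * c).
  have kpos : 0 < k by nra.
  exists (fun i => l i / k); split.
  - move=> i; have /andP[] := l01 i => ? ?; apply: divr_ge0 => //; lra.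
  - by rewrite -mulr_suml divff // gt_eqF.
  - move=> i; have /andP[] := l01 i => ? ?.
    rewrite ler_pdivrMr //; nra.
  - have -> : \sum_i l i / k * l i = k / k.
      by rewrite mulr_suml; apply: eq_bigr => i _; rewrite mulrAC hl.
    rewrite divff ?gt_eqF //; by rewrite ge_min lexx.
have hkn' : k < n%:R by nra.
set b := (1 - k * c) / (n%:R - k).
have nk0 : 0 < n%:R - k by lra.
have b0 : 0 <= b by apply: divr_ge0; lra.
have bc : b <= c by rewrite ler_pdivrMr //; nra.
exists (fun i => l i * c + (1 - l i) * b); split.
- move=> i; have /andP[] := l01 i => ? ?; nra.
- rewrite big_split /= -mulr_suml -mulr_suml sumrB sumr_const card_ord.
  rewrite -/k /b.
  rewrite mulrCA divff ?gt_eqF // mulr1; lra.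
- move=> i; have /andP[] := l01 i => ? ?; nra.
- have -> : \sum_i (l i * c + (1 - l i) * b) * l i = k * c.
    rewrite mulr_suml; apply: eq_bigr => i _.
    have h := hl i; nra.
  by rewrite ?lexx // ge_min lexx orbT.
Qed.

Theorem proposition2 (R : realType) (X : Type) (d : measure_display)
  (Y : measurableType d) (n : nat) (x : 'I_n -> X) (y : 'I_n -> Y)
  (alpha : R) (F : X -> Y) (F' : X -> probability Y R) :
  (0 < n)%N -> 0 < alpha < 1 ->
  (forall z : Y, measurable [set z]) ->
  (n%:R)^-1 * \sum_(i < n) rloss01 R x y F' i
    = (n%:R)^-1 * \sum_(i < n) loss01 R x y F i ->
  cvar alpha (rloss01 R x y F') <= cvar alpha (loss01 R x y F).
Proof.
move=> n0 /andP[a0 a1] hmeas hsum.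
set p := rloss01 R x y F'; set l := loss01 R x y F.
set c := (alpha * n%:R)^-1.
have npos : (0 : R) < n%:R by rewrite ltr0n.
have hnc : 1 <= n%:R * c.
  rewrite /c invfM mulrCA divff ?gt_eqF // mulr1.
  by rewrite -invr1 lef_pV2 ?posrE //; apply: ltW.
have hk : \sum_i p i = \sum_i l i.
  by apply: (mulfI _ hsum); rewrite invr_eq0 gt_eqF.
have p01 : forall i, 0 <= p i <= 1.
  move=> i; rewrite /p /rloss01.
  have mA : measurable [set z | z <> y i].
    have -> : [set z | z <> y i] = ~` [set y i] by [].
    exact: measurableC.
  have h0 := measure_ge0 (F' (x i)) [set z | z <> y i].
  have h1 := probability_le1 (F' (x i)) mA.
  have fin : (F' (x i) [set z | z <> y i]) \is a fin_num.
    by rewrite ge0_fin_numE // (le_lt_trans h1) // ltry.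
  apply/andP; split; first exact: fine_ge0.
  have := @fine_le R _ 1%E fin _ h1; by apply.
have hl : forall i, l i * l i = l i.
  by move=> i; rewrite /l /loss01; case: (F (x i) != y i); rewrite ?mulr0 ?mulr1.
have l01 : forall i, 0 <= l i <= 1.
  move=> i; have := hl i; nra.
have [v [v0 v1 vc vl]] := @exists_w R n c l n0 hnc hl.
apply: (@le_trans _ _ (Num.min 1 ((\sum_i p i) * c))).
  apply: ge_sup.
    by exists (\sum_i v i * p i), v; split => //; split.
  move=> s [w [[w0 [w1 wc]] ->]]; exact: upper_p.
rewrite hk; apply: (le_trans vl).
apply: ub_le_sup.
  exists 1 => s [w [[w0 [w1 wc]] ->]].
  apply: le_trans; first exact: upper_p. by rewrite ge_min lexx.
by exists v; split => //; split.
Qed.
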